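(* There is an absolute constant $c>0$ such that for every $n\ge 2$ and every graph $H$ on $n$ vertices with at least one edge, $Q(f_{[H]}) \ge c\, n$.
   Context: A homomorphism from a graph $H$ to a graph $G$ is a map $h:V(H)\to V(G)$ (not necessarily injective) such that $\{h(u),h(v)\}\in E(G)$ whenever $\{u,v\}\in E(H)$ (graphs are simple, so in particular $h(u)\ne h(v)$ for adjacent $u,v$). For a fixed graph $H$ on $n$ vertices, $f_{[H]}:\{0,1\}^{\binom n2}\to\{0,1\}$ takes as input a graph $G$ on vertex set $[n]$ given by its edge-indicator bits, and $f_{[H]}(G)=1$ iff $H$ admits a homomorphism into $G$. $Q(f)$ denotes the bounded-error (success probability at least $2/3$) quantum query complexity of a Boolean function $f$. *)

(* Defs.v *)
From HB Require Import structures.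
From mathcomp Require Import all_boot all_order all_algebra.
Set Implicit Arguments. Unset Strict Implicit. Unset Printing Implicit Defensive.
Import Order.TTheory GRing.Theory Num.Theory.
Local Open Scope ring_scope.

(* Index set of the C(n,2) edge-indicator bits: pairs (i,j) with i < j. *)
Definition edge_idx (n : nat) := {p : 'I_n * 'I_n | (p.1 < p.2)%N}.

Definition graph_adj (n : nat) (x : {ffun edge_idx n -> bool}) : rel 'I_n :=
  fun u v => [exists e : edge_idx n,
                x e && ((val e == (u, v)) || (val e == (v, u)))].

Definition simple_graph (n : nat) (H : rel 'I_n) : Prop :=
  symmetric H /\ irreflexive H.

Definition is_hom (n : nat) (H G : rel 'I_n) (h : 'I_n -> 'I_n) : bool :=
  [forall u, [forall v, H u v ==> G (h u) (h v)]].

Definition f_hom (n : nat) (H : rel 'I_n) (x : {ffun edge_idx n -> bool}) : bool :=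
  [exists h : {ffun 'I_n -> 'I_n}, is_hom H (graph_adj x) h].

Definition conjmx (C : numClosedFieldType) (m : nat) (A : 'M[C]_m) : 'M[C]_m :=
  map_mx (fun z => z^*) A.

Definition unitarymx (C : numClosedFieldType) (m : nat) (U : 'M[C]_m) : bool :=
  U *m (conjmx U)^T == 1%:M.

(* The state space is C^m
   (m = qdim.+1, computational basis 'I_m).  Each basis state k is labelled by
   the query index qlab k (None = no query); the oracle O_x is the diagonal
   phase oracle  |k> -> (-1)^{x_(qlab k)} |k>.  The algorithm starts in |0>,
   applies U_0, then alternately O_x and U_t (t = 1..T), and finally measures in
   the computational basis, outputting 1 iff the outcome lies in qacc. *)
Record qalg (C : numClosedFieldType) (I : finType) := QAlg {
  qT : nat;                               (* number of queries *)
  qdim : nat;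
  qlab : 'I_qdim.+1 -> option I;
  qU : nat -> 'M[C]_qdim.+1;
  qacc : pred 'I_qdim.+1;
  qU_unitary : forall t, (t <= qT)%N -> unitarymx (qU t)
}.

Section Run.
Variables (C : numClosedFieldType) (I : finType) (A : qalg C I).

Definition oracle (x : {ffun I -> bool}) : 'M[C]_((qdim A).+1) :=
  diag_mx (\row_k (if @qlab _ _ A k is Some i then (-1) ^+ x i else 1)).

Definition init_state : 'cV[C]_((qdim A).+1) := \col_k (if k == ord0 then 1 else 0).

Fixpoint run_state (x : {ffun I -> bool}) (t : nat) : 'cV[C]_((qdim A).+1) :=
  match t with
  | 0 => qU A 0 *m init_state
  | t'.+1 => qU A t *m (oracle x *m run_state x t')
  end.

Definition accept_prob (x : {ffun I -> bool}) : C :=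
  \sum_(k | @qacc _ _ A k) `|run_state x (qT A) k 0| ^+ 2.

Definition computes (f : {ffun I -> bool} -> bool) : Prop :=
  forall x, if f x then 2%:R / 3%:R <= accept_prob x
            else accept_prob x <= 1%:R / 3%:R.
End Run.

(* Main.v *)
Require Import Defs.
From HB Require Import structures.
From mathcomp Require Import all_boot all_order all_algebra.
From mathcomp Require Import ring zify.
Import Order.TTheory GRing.Theory Num.Theory.
Local Open Scope ring_scope.

Definition flipb {I : finType} (x : {ffun I -> bool}) (i0 : I) : {ffun I -> bool} :=
  [ffun i => if i == i0 then ~~ x i else x i].

Section Quantum.
Variables (C : numClosedFieldType) (I : finType) (A : qalg C I).
Local Notation m := (qdim A).+1.

Definition nrm2 (v : 'cV[C]_m) : C := \sum_k `|v k 0| ^+ 2.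

Lemma nrm2_ge0 v : 0 <= nrm2 v.
Proof. by apply: sumr_ge0 => k _; apply: exprn_ge0. Qed.

Lemma nrm2_ip v : nrm2 v = (((map_mx Num.conj_op v)^T) *m v) 0 0.
Proof.
rewrite mxE /nrm2; apply: eq_bigr => k _; rewrite !mxE normCK mulrC.
by [].
Qed.

Lemma nrm2_unitary (U : 'M[C]_m) v : Defs.unitarymx U -> nrm2 (U *m v) = nrm2 v.
Proof.
move=> /eqP HU; have HU' := mulmx1C HU.
rewrite !nrm2_ip.
rewrite (map_mxM (Num.conj_op : {rmorphism C -> C})) trmx_mul.
rewrite -mulmxA (mulmxA _ U v).
have -> : (map_mx Num.conj_op U)^T *m U = 1%:M by exact: HU'.
by rewrite mul1mx.
Qed.

Lemma young (s r : nat) (a b : C) :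
  (s * r)%:R * `|a + b| ^+ 2 <= (s + r)%:R * (r%:R * `|a| ^+ 2 + s%:R * `|b| ^+ 2).
Proof.
rewrite -subr_ge0.
have -> : (s + r)%:R * (r%:R * `|a| ^+ 2 + s%:R * `|b| ^+ 2) - (s * r)%:R * `|a + b| ^+ 2
   = `|r%:R * a - s%:R * b| ^+ 2.
  have Ec1 : (a + b)^* = a^* + b^* by rewrite rmorphD.
  have Ec2 : (r%:R * a - s%:R * b)^* = r%:R * a^* - s%:R * b^*.
    by rewrite rmorphB !rmorphM !rmorph_nat.
  rewrite !normCK Ec1 Ec2 natrM natrD; ring.
exact: exprn_ge0.
Qed.

Definition lo (x : {ffun I -> bool}) (k : 'I_m) : C :=
  if @qlab _ _ A k is Some i then (-1) ^+ x i else 1.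

Lemma oracleE x (v : 'cV[C]_m) k : (oracle A x *m v) k 0 = lo x k * v k 0.
Proof. by rewrite mul_diag_mx !mxE. Qed.

Lemma norm_lo x k : `|lo x k| = 1.
Proof. by rewrite /lo; case: (@qlab _ _ A k) => [i|]; rewrite ?normrX ?normrN1 ?expr1n ?normr1. Qed.

Lemma nrm2_oracle x v : nrm2 (oracle A x *m v) = nrm2 v.
Proof. by apply: eq_bigr => k _; rewrite oracleE normrM norm_lo mul1r. Qed.

Lemma nrm2_init : nrm2 (init_state A) = 1.
Proof.
rewrite /nrm2 (bigD1 ord0) //= big1 ?addr0.
  by rewrite mxE eqxx normr1 expr1n.
by move=> k /negPf Hk; rewrite mxE Hk normr0 expr0n.
Qed.

Lemma nrm2_run x t : (t <= qT A)%N -> nrm2 (run_state A x t) = 1.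
Proof.
elim: t => [|t IH] Ht /=.
  by rewrite nrm2_unitary ?nrm2_init //; apply: qU_unitary.
rewrite nrm2_unitary ?nrm2_oracle ?IH //; first exact: ltnW.
exact: qU_unitary.
Qed.


Variable x0 : {ffun I -> bool}.

Definition qq (i0 : I) (s : nat) : C :=
  \sum_(k | @qlab _ _ A k == Some i0) `|run_state A x0 s k 0| ^+ 2.

Definition DD (i0 : I) (t : nat) : C :=
  nrm2 (run_state A (flipb x0 i0) t - run_state A x0 t).

Lemma lo_diff i0 k :
  `|lo (flipb x0 i0) k - lo x0 k| ^+ 2 = if @qlab _ _ A k == Some i0 then 4 else 0.
Proof.
rewrite /lo; case: (@qlab _ _ A k) => [i|] /=; last by rewrite subrr normr0 expr0n.
rewrite ffunE; case: (eqVneq i i0) => [->|ne].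
  rewrite eqxx /=; case: (x0 i0) => /=.
    rewrite expr0 expr1 opprK -mulr2n normrMn normr1 -natrX //.
  rewrite expr0 expr1 -opprD normrN -mulr2n normrMn normr1 -natrX //.
have -> : (Some i == Some i0) = false by apply/eqP => -[]; apply/eqP.
by rewrite subrr normr0 expr0n.
Qed.

Lemma DD0 i0 : DD i0 0 = 0.
Proof.
rewrite /DD /= subrr /nrm2 big1 // => k _.
by rewrite mxE normr0 expr0n.
Qed.

Lemma subE (u v : 'cV[C]_m) k : (u - v) k 0 = u k 0 - v k 0.
Proof. by rewrite !mxE. Qed.

Lemma DD_step i0 t s r : (t < qT A)%N ->
  (s * r)%:R * DD i0 t.+1 <= (s + r)%:R * (r%:R * DD i0 t + s%:R * (4 * qq i0 t)).
Proof.
move=> Ht.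
rewrite /DD /=.
rewrite -mulmxBr nrm2_unitary; last exact: qU_unitary.
set psy := run_state A (flipb x0 i0) t.
set psx := run_state A x0 t.
have -> : (s + r)%:R * (r%:R * nrm2 (psy - psx) + s%:R * (4 * qq i0 t)) =
   \sum_k (s + r)%:R * (r%:R * `|lo (flipb x0 i0) k * (psy k 0 - psx k 0)| ^+ 2
        + s%:R * `|(lo (flipb x0 i0) k - lo x0 k) * psx k 0| ^+ 2).
  rewrite -mulr_sumr; congr (_ * _).
  rewrite big_split /= -!mulr_sumr.
  congr (_ * _ + _ * _).
    by apply: eq_bigr => k _; rewrite normrM norm_lo mul1r !mxE.
  rewrite /qq big_mkcond /= mulr_sumr.
  apply: eq_bigr => k _; rewrite normrM exprMn lo_diff.
  by case: ifP => _; rewrite ?mul0r ?mulr0.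
rewrite /nrm2 mulr_sumr; apply: ler_sum => k _.
have -> : (oracle A (flipb x0 i0) *m psy - oracle A x0 *m psx) k 0 =
    lo (flipb x0 i0) k * (psy k 0 - psx k 0) + (lo (flipb x0 i0) k - lo x0 k) * psx k 0.
  rewrite subE !oracleE; ring.
exact: young.
Qed.

Lemma qq_ge0 i0 s : 0 <= qq i0 s.
Proof. by apply: sumr_ge0 => k _; apply: exprn_ge0. Qed.

Lemma DD_bound i0 t : (t <= qT A)%N ->
  DD i0 t <= (8 * t)%:R * \sum_(s < t) qq i0 s.
Proof.
elim: t => [|t IH] Ht; first by rewrite DD0 muln0 mul0r.
have Ht' : (t < qT A)%N by [].
case: t IH Ht Ht' => [|t] IH Ht Ht'.
  have := DD_step i0 0 1 1 Ht'.
  rewrite DD0 big_ord1 !mul1r add0r.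
  have -> : (1 + 1)%:R * (4 * qq i0 0) = (8 * 1)%:R * qq i0 0 :> C.
    by rewrite muln1 mulrA -natrM.
  by [].
have IH' := IH (ltnW Ht').
have St := DD_step i0 t.+1 t.+1 1 Ht'.
rewrite big_ord_recr /=.
set a := DD i0 t.+2 in St *.
set d := DD i0 t.+1 in St IH' *.
set S := \sum_(s < t.+1) qq i0 s in IH' *.
set q := qq i0 t.+1 in St *.
have q0 : 0 <= q by apply: qq_ge0.
have S0 : 0 <= S by apply: sumr_ge0 => s _; apply: qq_ge0.
set tt : C := t.+1%:R.
have tpos : 0 < tt by rewrite ltr0n.
move: St IH'; rewrite muln1 natrD mul1r -/tt => St IH'.
have -> : (8 * t.+2)%:R = 8 * (tt + 1) :> C by rewrite /tt natr1 natrM.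
rewrite natrM -/tt in IH'.
rewrite -subr_ge0 -(pmulr_rge0 _ tpos).
have -> : tt * (8 * (tt + 1) * (S + q) - a) =
   ((tt + 1) * (d + tt * (4 * q)) - tt * a) + (tt + 1) * (8%:R * tt * S - d)
     + (tt + 1) * (4 * tt * q).
  ring.
apply: addr_ge0; first apply: addr_ge0.
- by rewrite subr_ge0.
- by apply: mulr_ge0; [apply: addr_ge0; rewrite ?ler01 ?ltW // | rewrite subr_ge0].
- apply: mulr_ge0; first by apply: addr_ge0; rewrite ?ler01 ?ltW.
  by apply: mulr_ge0 => //; apply: mulr_ge0; rewrite ?ler0n ?ltW.
Qed.

Definition accp (u : 'cV[C]_m) : C := \sum_(k | @qacc _ _ A k) `|u k 0| ^+ 2.

Lemma nrm2_sym (u v : 'cV[C]_m) : nrm2 (u - v) = nrm2 (v - u).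
Proof. by apply: eq_bigr => k _; rewrite !mxE distrC. Qed.

Lemma prob_gap (u v : 'cV[C]_m) : 2%:R / 3%:R <= accp u -> accp v <= 1%:R / 3%:R ->
  1 <= 18 * nrm2 (u - v).
Proof.
move=> Hu Hv.
rewrite ler_pdivrMr ?ltr0n // in Hu.
rewrite ler_pdivlMr ?ltr0n // in Hv.
set Da := \sum_(k | @qacc _ _ A k) `|u k 0 - v k 0| ^+ 2.
have Hy : 2 * accp u <= 3 * (accp v + 2 * Da).
  rewrite /accp /Da !mulr_sumr -big_split /= mulr_sumr; apply: ler_sum => k _.
  have := young 2 1 (v k 0) (u k 0 - v k 0).
  rewrite [v k 0 + _]addrC subrK mul1r.
  by [].
have Hd : Da <= nrm2 (u - v).
  rewrite /nrm2 [X in _ <= X](bigID (fun k => @qacc _ _ A k)) /= -[X in X <= _]addr0.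
  apply: lerD; first by apply: ler_sum => k _; rewrite !mxE.
  by apply: sumr_ge0 => k _; apply: exprn_ge0.
rewrite -subr_ge0.
have -> : 18 * nrm2 (u - v) - 1 = 3 * (3 * (accp v + 2 * Da) - 2 * accp u)
   + 18 * (nrm2 (u - v) - Da) + 2 * (accp u * 3 - 2) + 3 * (1 - accp v * 3).
  ring.
repeat apply: addr_ge0; apply: mulr_ge0; rewrite ?ler0n ?subr_ge0 //.
Qed.

Lemma sumq (J : finType) (e : J -> I) (F : 'I_m -> C) : injective e ->
  (forall k, 0 <= F k) ->
  \sum_j \sum_(k | @qlab _ _ A k == Some (e j)) F k <= \sum_k F k.
Proof.
move=> einj F0.
under eq_bigr => j _ do rewrite big_mkcond /=.
rewrite exchange_big /=; apply: ler_sum => k _.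
case: (pickP (fun j => @qlab _ _ A k == Some (e j))) => [j0 Hj0 | Hn].
  rewrite (bigD1 j0) //= Hj0 big1 ?addr0 // => j Hj.
  case: ifP => // /eqP Hk; move/eqP: Hj0; rewrite Hk => -[] /einj Hjj.
  by rewrite Hjj eqxx in Hj.
by rewrite big1 // => j _; rewrite Hn.
Qed.

Lemma hybrid (f : {ffun I -> bool} -> bool) (J : finType) (e : J -> I) :
  injective e -> (forall j, f (flipb x0 (e j)) != f x0) -> computes A f ->
  (#|J| <= 144 * qT A ^ 2)%N.
Proof.
move=> einj Hs Hc.
set T := qT A.
have HD j : 1 <= 18 * DD (e j) T.
  have := Hc x0; have := Hc (flipb x0 (e j)).
  move: (Hs j); case: (f x0); case: (f (flipb x0 (e j))) => //= _ H1 H0.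
    by rewrite /DD nrm2_sym; apply: prob_gap.
  by rewrite /DD; apply: prob_gap.
have H1 : (#|J|%:R : C) <= 18 * \sum_j DD (e j) T.
  rewrite mulr_sumr -sumr_const; apply: ler_sum => j _; exact: HD j.
have H2 : \sum_j DD (e j) T <= \sum_j (8 * T)%:R * \sum_(s < T) qq (e j) s.
  by apply: ler_sum => j _; apply: DD_bound.
have H3 : \sum_j \sum_(s < T) qq (e j) s <= T%:R.
  have -> : (T%:R : C) = \sum_(s < T) 1 by rewrite sumr_const card_ord.
  rewrite exchange_big /=.
  apply: ler_sum => s _.
  rewrite -(@nrm2_run x0 s (ltnW (ltn_ord s))).
  by apply: sumq => // k; apply: exprn_ge0.
have : (#|J|%:R : C) <= (144 * T ^ 2)%:R.
  apply: (le_trans H1); rewrite -mulr_sumr in H2.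
  apply: (le_trans (ler_wpM2l _ H2)); first by rewrite ler0n.
  rewrite mulrA; apply: (le_trans (ler_wpM2l _ H3)).
    by apply: mulr_ge0; rewrite ler0n.
  rewrite -!natrM ler_nat; lia.
by rewrite ler_nat.
Qed.
End Quantum.

Section Comb.
Variables (n : nat) (H : rel 'I_n.+1).
Local Notation N := n.+1.

Definition mkx (P : 'I_N -> 'I_N -> bool) : {ffun edge_idx N -> bool} :=
  [ffun e => P (val e).1 (val e).2].

Lemma adjE P u v :
  graph_adj (mkx P) u v = ((u < v)%N && P u v) || ((v < u)%N && P v u).
Proof.
rewrite /graph_adj; apply/idP/idP.
- move=> /existsP [[[a b] /= hab]]; rewrite ffunE /= => /andP[Hp /orP[] /eqP [<- <-]].
    by rewrite hab Hp.
  by rewrite hab Hp orbT.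
- move=> /orP[] /andP[huv hp]; apply/existsP.
    by exists (exist (fun p : 'I_N * 'I_N => (p.1 < p.2)%N) (u, v) huv); rewrite ffunE /= hp eqxx.
  by exists (exist (fun p : 'I_N * 'I_N => (p.1 < p.2)%N) (v, u) huv); rewrite ffunE /= hp eqxx orbT.
Qed.

Lemma flip_mk P (e0 : edge_idx N) : flipb (mkx P) e0 =
  mkx (fun u v => if (val u == val (val e0).1) && (val v == val (val e0).2)
                  then ~~ P u v else P u v).
Proof.
apply/ffunP => e; rewrite !ffunE.
case: e e0 => [[a b] hab] [[a0 b0] hab0] /=.
have -> : (exist (fun p : 'I_N * 'I_N => (p.1 < p.2)%N) (a, b) hab ==
           exist (fun p : 'I_N * 'I_N => (p.1 < p.2)%N) (a0, b0) hab0) = ((a, b) == (a0, b0)) by [].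
by rewrite xpair_eqE.
Qed.

Definition colb j := [exists c : {ffun 'I_N -> 'I_N},
  [forall u, (c u < j)%N] && [forall u, [forall v, H u v ==> (c u != c v)]]].

Lemma colb_intro (c : 'I_N -> nat) j : (j <= N)%N -> (forall u, c u < j)%N ->
  (forall u v, H u v -> c u != c v) -> colb j.
Proof.
move=> hj hc hp; apply/existsP; exists [ffun u => inord (c u)]; apply/andP; split.
  by apply/forallP => u; rewrite ffunE inordK ?(leq_trans (hc u) hj).
apply/forallP => u; apply/forallP => v; apply/implyP => huv; rewrite !ffunE.
apply: contra (hp u v huv) => /eqP E; apply/eqP.
by have := congr1 val E; rewrite /= !inordK ?(leq_trans (hc _) hj).
Qed.

Variable k : nat.
Hypothesis Hk : colb k.
Hypothesis Hmin : forall j, colb j -> (k <= j)%N.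
Hypothesis Hk2 : (2 <= k)%N.
Hypothesis HkN : (k <= N)%N.

Lemma yes_inst x (emb : nat -> 'I_N) :
  (forall i j, (i < k)%N -> (j < k)%N -> i != j -> graph_adj x (emb i) (emb j)) ->
  f_hom H x.
Proof.
move=> Hemb; move: Hk => /existsP [c /andP [/forallP hc /forallP hp]].
apply/existsP; exists [ffun u => emb (c u)]; apply/forallP => u; apply/forallP => v.
apply/implyP => huv; rewrite !ffunE; apply: Hemb; rewrite ?hc //.
by move: (hp u) => /forallP /(_ v) /implyP /(_ huv).
Qed.

Lemma no_inst x (g : 'I_N -> nat) : (forall u, g u < k.-1)%N ->
  (forall u v, graph_adj x u v -> g u != g v) -> f_hom H x = false.
Proof.
move=> hg hgp; apply: negbTE; apply/negP => /existsP [h /forallP hh].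
have : colb k.-1.
  apply: (@colb_intro (fun u => g (h u))); first by apply: leq_trans (leq_pred k) HkN.
    by move=> u; apply: hg.
  move=> u v huv; apply: hgp.
  by move: (hh u) => /forallP /(_ v) /implyP /(_ huv).
move/Hmin; lia.
Qed.

Lemma adj_nat (Q : nat -> nat -> bool) (a b : nat) : (a < N)%N -> (b < N)%N ->
  graph_adj (mkx (fun u v => Q u v)) (inord a) (inord b) =
  ((a < b)%N && Q a b) || ((b < a)%N && Q b a).
Proof. by move=> ha hb; rewrite adjE !inordK. Qed.

Lemma and_yes : f_hom H (mkx (fun u v => (v < k)%N)).
Proof.
apply: (@yes_inst _ (fun i => inord i)) => i j hi hj hij.
rewrite (@adj_nat (fun _ v => (v < k)%N)); lia.
Qed.

Lemma and_no (a b : nat) : (a < b)%N -> (b < k)%N ->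
  f_hom H (mkx (fun u v => if ((u : nat) == a) && ((v : nat) == b) then ~~ (v < k)%N else (v < k)%N)) = false.
Proof.
move=> hab hbk.
apply: (@no_inst _ (fun v => if (v < k)%N then (if (v : nat) == b then a else if (v < b)%N then (v : nat) else (v : nat).-1) else 0%N)).
  move=> v; case: ifP => h1; try case: ifP => h2; try case: ifP => h3; lia.
move=> u v; rewrite adjE.
case: (ltnP u k) => h1; case: (ltnP v k) => h2; case: (eqVneq (u : nat) b) => h3;
  case: (eqVneq (v : nat) b) => h4; case: (eqVneq (u : nat) a) => h5; case: (eqVneq (v : nat) a) => h6;
  case: (ltnP u b) => h7; case: (ltnP v b) => h8; move=> /=; lia.
Qed.

Lemma or_no : f_hom H (mkx (fun u v => (u < k.-2)%N)) = false.
Proof.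
apply: (@no_inst _ (fun v => if (v < k.-2)%N then (v : nat) else k.-2)).
  by move=> v; case: ifP => h1; lia.
move=> u v; rewrite adjE.
case: (ltnP u k.-2) => h1; case: (ltnP v k.-2) => h2; move=> /=; lia.
Qed.

Lemma or_yes (a b : nat) : (k.-2 <= a)%N -> (a < b)%N -> (b < N)%N ->
  f_hom H (mkx (fun u v => if ((u : nat) == a) && ((v : nat) == b)
                            then ~~ (u < k.-2)%N else (u < k.-2)%N)).
Proof.
move=> ha hab hb.
apply: (@yes_inst _ (fun i => inord (if (i < k.-2)%N then i else if i == k.-2 then a else b)))
  => i j hi hj hij.
rewrite (@adj_nat (fun u v => if (u == a) && (v == b) then ~~ (u < k.-2)%N else (u < k.-2)%N));
  try (case: ifP => ?; try case: ifP => ?; lia).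
case: (ltnP i k.-2) => h1; case: (ltnP j k.-2) => h2; case: (eqVneq i k.-2) => h3;
  case: (eqVneq j k.-2) => h4; move=> /=;
  (do ! case: eqVneq => ?); rewrite /=; lia.
Qed.
End Comb.


Lemma family_bound (C : numClosedFieldType) (n : nat) (A : qalg C (edge_idx n.+1))
  (f : {ffun edge_idx n.+1 -> bool} -> bool) (x0 : {ffun edge_idx n.+1 -> bool}) (off m : nat) :
  (off + m <= n.+1)%N -> computes A f ->
  (forall a b (h : ((inord a : 'I_n.+1) < inord b)%N), (off <= a)%N -> (a < b)%N ->
     (b < off + m)%N ->
     f (flipb x0 (exist (fun p : 'I_n.+1 * 'I_n.+1 => (p.1 < p.2)%N) (inord a, inord b) h))
       != f x0) ->
  ((m %/ 2) * (m - m %/ 2) <= 144 * qT A ^ 2)%N.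
Proof.
move=> hm HA Hs.
set p := (m %/ 2)%N; set q := (m - p)%N.
have hp : (p <= m)%N by rewrite /p leq_div.
have hq : q = (m - p)%N by [].
have Hpf (ij : ('I_p * 'I_q)%type) :
    ((inord (off + ij.1) : 'I_n.+1) < (inord (off + p + ij.2) : 'I_n.+1))%N.
  case: ij => i j /=; have hi := ltn_ord i; have hj := ltn_ord j.
  rewrite !inordK; lia.
pose e (ij : ('I_p * 'I_q)%type) : edge_idx n.+1 := exist (fun p : 'I_n.+1 * 'I_n.+1 => (p.1 < p.2)%N)
   (inord (off + ij.1), inord (off + p + ij.2)) (Hpf ij).
have einj : injective e.
  move=> [i j] [i' j'] /(congr1 val) /= [] /(congr1 (@nat_of_ord n.+1)) E1 /(congr1 (@nat_of_ord n.+1)) E2.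
  have := ltn_ord i; have := ltn_ord j; have := ltn_ord i'; have := ltn_ord j' => h1 h2 h3 h4.
  rewrite !inordK in E1 E2; try lia.
  by congr (_, _); apply: val_inj => /=; lia.
have := @hybrid C _ A x0 f _ e einj _ HA.
rewrite card_prod !card_ord; apply.
move=> [i j]; have := ltn_ord i; have := ltn_ord j => hj hi.
apply: Hs => /=; lia.
Qed.

Theorem theorem5 :
  exists c : rat, 0 < c /\
    forall (C : numClosedFieldType) (n : nat) (H : rel 'I_n),
      (2 <= n)%N ->
      simple_graph H ->
      (exists u v, H u v) ->
      forall A : qalg C (edge_idx n),
        computes A (f_hom H) ->
        c * n%:R <= (qT A)%:R.
Proof.
exists (48%:R)^-1; split; first by rewrite invr_gt0 ltr0n.
move=> C [|n] H Hn [Hsym Hirr] [u0 [v0 Huv]] A HA; first by [].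
have colbN : colb n H n.+1.
  apply: (@colb_intro n H (fun u => val u)) => //; first by move=> u; exact: ltn_ord.
  move=> u v huv; apply/negP => /eqP /val_inj E; by move: huv; rewrite E Hirr.
have Hex : exists j, colb n H j by exists n.+1.
case: (ex_minnP Hex) => k Hk Hmin.
have HkN := Hmin _ colbN.
have Hk2 : (1 < k)%N.
  case/existsP: (Hk) => c /andP [/forallP hc /forallP hp].
  move: (hp u0) => /forallP /(_ v0) /implyP /(_ Huv) hneq.
  case: (ltnP 1 k) => // hk.
  have := hc u0; have := hc v0 => h1 h2.
  have E : c u0 == c v0.
    rewrite -val_eqE /=; move: (leq_trans h2 hk) (leq_trans h1 hk).
    by rewrite !ltnS !leqn0 => /eqP -> /eqP ->.
  by rewrite E in hneq.
have key : exists off m x0, [/\ (off + m <= n.+1)%N, (n.+3 <= 2 * m)%N &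
  (forall a b (h : ((inord a : 'I_n.+1) < inord b)%N), (off <= a)%N -> (a < b)%N ->
     (b < off + m)%N ->
     f_hom H (flipb x0 (exist (fun p : 'I_n.+1 * 'I_n.+1 => (p.1 < p.2)%N) (inord a, inord b) h))
       != f_hom H x0)].
  case: (leqP n.+3 (2 * k)) => hcase.
    exists 0%N, k, (mkx n (fun _ v => (v < k)%N)); split => //.
    move=> a b h ha hab hb; rewrite flip_mk /= !inordK; try lia.
    by rewrite (@and_yes n H k) ?(@and_no n H k).
  exists k.-2, (n.+1 - k.-2)%N, (mkx n (fun u _ => (u < k.-2)%N)); split; try lia.
  move=> a b h ha hab hb; rewrite flip_mk /= !inordK; try lia.
  rewrite (@or_no n H k) // (@or_yes n H k) //; lia.
case: key => off [m [x0 [hm h2m Hs]]].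
have := @family_bound C n A _ x0 off m hm HA Hs.
set T := qT A => hb.
have hN : (n.+1 <= 48 * T)%N.
  have hd := divn_eq m 2; have hr := @ltn_pmod m 2 isT.
  nia.
rewrite mulrC ler_pdivrMr ?ltr0n // -natrM ler_nat; lia.
Qed.
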